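(* Let $L\in\{1,2,\dots,q-1\}$, let $\mathcal C$ be a linear $[n,k]$ code over $F=\mathrm{GF}(q)$, and let $\tau\in\mathbb Z_{\ge 0}$ satisfy $\tau\ge \frac{L(n-k)}{L+1}$. If $\mathcal C$ is $(\tau,L)$-list decodable, then $\mathcal C$ is MDS (i.e., its minimum distance is $n-k+1$).
   Context: $F=\mathrm{GF}(q)$. For $L\in\mathbb Z^+$ and $\tau\in\mathbb Z_{\ge0}$, a code $\mathcal C\subseteq F^n$ is $(\tau,L)$-list decodable if for every $y\in F^n$ at most $L$ codewords of $\mathcal C$ lie at Hamming distance at most $\tau$ from $y$. *)

(* Defs.v *)
From HB Require Import structures.
From mathcomp Require Import all_boot all_order all_algebra all_field.
Set Implicit Arguments. Unset Strict Implicit. Unset Printing Implicit Defensive.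
Import GRing.Theory.
Local Open Scope ring_scope.

Definition hwt (F : finFieldType) (n : nat) (v : 'rV[F]_n) : nat :=
  #|[set i : 'I_n | v ord0 i != 0]|.

Definition hdist (F : finFieldType) (n : nat) (u v : 'rV[F]_n) : nat :=
  #|[set i : 'I_n | u ord0 i != v ord0 i]|.

Definition list_decodable (F : finFieldType) (n : nat)
    (C : {pred 'rV[F]_n}) (tau L : nat) : Prop :=
  forall y : 'rV[F]_n,
    (#|[set c : 'rV[F]_n | (c \in C) && (hdist c y <= tau)%N]| <= L)%N.

Definition min_distance_is (F : finFieldType) (n : nat)
    (C : {vspace 'rV[F]_n}) (d : nat) : Prop :=
  (exists2 c : 'rV[F]_n, (c \in C) && (c != 0) & hwt c = d) /\
  (forall c : 'rV[F]_n, c \in C -> c != 0 -> (d <= hwt c)%N).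

(* Main.v *)
Require Import Defs.
From HB Require Import structures.
From mathcomp Require Import all_boot all_order all_algebra all_field.
From mathcomp Require Import zify.
Set Implicit Arguments. Unset Strict Implicit. Unset Printing Implicit Defensive.
Import GRing.Theory.
Local Open Scope ring_scope.
Lemma sub_of_size (T : finType) (S : {set T}) m : (m <= #|S|)%N ->
  exists2 A : {set T}, A \subset S & #|A| = m.
Proof.
move=> hm; exists [set x in take m (enum S)].
  by apply/subsetP=> x; rewrite inE => /mem_take; rewrite mem_enum.
rewrite cardsE; have/card_uniqP -> : uniq (take m (enum S)).
  by rewrite take_uniq ?enum_uniq.
by rewrite size_takel // -cardE.
Qed.

Lemma parts (T : finType) m K : forall (S : {set T}), ((K+1) * m <= #|S|)%N ->
  exists f : T -> nat, forall j, (j <= K)%N -> (m <= #|[set i in S | f i == j]|)%N.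
Proof.
elim: K => [|K IH] S hS.
  exists (fun _ => 0%N) => j; rewrite leqn0 => /eqP ->.
  rewrite (_ : [set i in S | _] = S); first lia.
  by apply/setP=> x; rewrite !inE andbT.
have [A AS cA] := @sub_of_size _ S m ltac:(lia).
have hD : ((K + 1) * m <= #|S :\: A|)%N.
  by rewrite cardsD (setIidPr AS); lia.
have [f hf] := IH _ hD.
exists (fun i => if i \in A then K.+1 else f i) => j hj.
have [hjl| ->] : (j < K.+1)%N \/ j = K.+1 by lia.
- apply: leq_trans (hf j ltac:(lia)) _. apply: subset_leq_card.
  apply/subsetP=> x; rewrite !inE => /andP[/andP[xA xS] e].
  by rewrite xS (negbTE xA).
- rewrite -cA; apply: subset_leq_card; apply/subsetP=> x xA.
  by rewrite inE (subsetP AS x xA) xA eqxx.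
Qed.
Lemma natfact a b d : (b <= d.-1)%N -> (a + b = d)%N -> (0 < d)%N -> (0 < a)%N.
Proof. lia. Qed.

Lemma singleton_ex (F : finFieldType) n (C : {vspace 'rV[F]_n}) :
  (0 < \dim C)%N ->
  exists2 c : 'rV[F]_n, (c \in C) && (c != 0) & (hwt c <= n - (\dim C).-1)%N.
Proof.
move=> hk; set km := (\dim C).-1.
have le : (km <= n)%N.
  have := dimvS (subvf C); rewrite dimvf /dim /= mul1n; rewrite /km; lia.
pose P : 'M[F]_(n, km) := \matrix_(i, j) (i == widen_ord le j)%:R.
pose f : 'Hom('rV[F]_n, 'rV[F]_km) := linfun (mulmxr P).
have hd := limg_ker_dim f C.
have : (\dim (f @: C) <= km)%N.
  by have := dimvS (subvf (f @: C)); rewrite dimvf /dim /= mul1n.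
move=> hfd.
have : (C :&: lker f)%VS != 0%VS.
  rewrite -dimv_eq0 -lt0n; move: hfd hd hk; rewrite /km.
  by apply: natfact.
move=> nz0; have nz : vpick (C :&: lker f)%VS != 0 by rewrite vpick0.
have := memv_pick (C :&: lker f)%VS; rewrite memv_cap => /andP[cC cK].
exists (vpick (C :&: lker f)%VS); first by rewrite cC nz.
move: cK; rewrite memv_ker lfunE /= => /eqP h0.
set c := vpick _ in h0 *.
have cw : forall j : 'I_km, c 0 (widen_ord le j) = 0.
  move=> j; have := congr1 (fun M : 'rV_km => M 0 j) h0.
  rewrite /= mxE (bigD1 (widen_ord le j)) //= mxE eqxx mulr1 big1 ?addr0 ?mxE //.
  by move=> i /negbTE ne; rewrite mxE ne mulr0.
rewrite /hwt.
have sub : [set i | c 0 i != 0] \subset ~: [set widen_ord le j | j in 'I_km].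
  apply/subsetP=> i; rewrite !inE; apply: contra => /imsetP[j _ ->].
  by rewrite cw.
apply: leq_trans (subset_leq_card sub) _.
have := cardsC [set widen_ord le j | j in 'I_km].
rewrite card_imset; last by move=> x y /(congr1 val) /= /val_inj.
rewrite !card_ord; lia.
Qed.

Lemma weight_lb (F : finFieldType) (n k L tau : nat) (C : {vspace 'rV[F]_n})
  (hL : (L + 1 <= #|F|)%N)
  (htau : (L * (n - k) <= (L + 1) * tau)%N)
  (hdec : list_decodable (fun c => c \in C) tau L)
  (c : 'rV[F]_n) : c \in C -> c != 0 -> (n - k < hwt c)%N.
Proof.
move=> cC cnz; rewrite ltnNge; apply/negP => hw.
set S := [set i | c 0 i != 0].
have hS : #|S| = hwt c by [].
set w := hwt c in hw hS.
have hm : ((L + 1) * (w - tau) <= #|S|)%N.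
  rewrite hS; have : (L * w <= L * (n - k))%N by apply: leq_mul.
  nia.
have [f hf] := parts hm.
pose lam (j : nat) : F := nth 0 (enum F) j.
pose y : 'rV[F]_n := \row_i (lam (f i) * c 0 i).
have dist j : (j <= L)%N -> (hdist (lam j *: c) y <= tau)%N.
  move=> hj; rewrite /hdist.
  have sub : [set i | (lam j *: c) 0 i != y 0 i] \subset S :\: [set i in S | f i == j].
    apply/subsetP=> i; rewrite !inE !mxE.
    case: (eqVneq (c 0 i) 0) => [->|ci]; first by rewrite !mulr0 eqxx.
    by case: (eqVneq (f i) j) => [->|]; rewrite ?eqxx.
  apply: leq_trans (subset_leq_card sub) _.
  rewrite cardsD (_ : S :&: _ = [set i in S | f i == j]); last first.
    by apply/setIidPr/subsetP=> i; rewrite inE => /andP[].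
  have := hf j hj; rewrite hS; lia.
pose g (j : 'I_(L+1)) := lam j *: c.
have ginj : injective g.
  move=> a b /eqP; rewrite /g -subr_eq0 -scalerBl scaler_eq0 (negbTE cnz) orbF.
  rewrite subr_eq0 => /eqP e; apply/val_inj => /=.
  have hsz : size (enum F) = #|F| by rewrite cardE.
  have ha : (a < size (enum F))%N by rewrite hsz; have := ltn_ord a; lia.
  have hb : (b < size (enum F))%N by rewrite hsz; have := ltn_ord b; lia.
  by move: e; rewrite /lam; move/eqP; rewrite nth_uniq ?enum_uniq // => /eqP.
have := hdec y.
have sub : g @: setT \subset [set c' | (c' \in (fun c => c \in C)) && (hdist c' y <= tau)%N].
  apply/subsetP=> x /imsetP[j _ ->]; rewrite inE /= /g memvZ //=.
  by apply: dist; have := ltn_ord j; lia.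
have := subset_leq_card sub; rewrite card_imset // cardsT card_ord; move=> h1 h2; have := leq_trans h1 h2; lia.
Qed.

Theorem mainTheorem1 (F : finFieldType) (q n k L tau : nat)
  (C : {vspace 'rV[F]_n})
  (hq : #|F| = q)
  (hk : \dim C = k) (hk0 : (0 < k)%N)
  (hL : (1 <= L <= q - 1)%N)
  (htau : (L * (n - k) <= (L + 1) * tau)%N)
  (hdec : list_decodable (fun c => c \in C) tau L) :
  min_distance_is C (n - k + 1).
Proof.
have hL' : (L + 1 <= #|F|)%N by rewrite hq; lia.
have lb := weight_lb hL' htau hdec.
split; last by move=> c cC cnz; have := lb c cC cnz; lia.
have [c /andP[cC cnz] hw] := @singleton_ex F n C ltac:(lia).
exists c; first by rewrite cC cnz.
have := lb c cC cnz; move: hw; rewrite hk; lia.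
Qed.
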